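(* Let $q$ be a prime power with $q\equiv 3\pmod 8$, and let $f(x)=x^2\left(x^{(q-1)/2}+3\right)$ or $f(x)=x^2\left(x^{(q-1)/2}-3\right)$ in $\mathbb{F}_q[x]$. Then $f$ is a permutation polynomial of $\mathbb{F}_q$ and $\delta_f\le 4$.
   Context: A polynomial $f\in\mathbb{F}_q[x]$ is a permutation polynomial of $\mathbb{F}_q$ if $c\mapsto f(c)$ is a bijection of $\mathbb{F}_q$. For $a\in\mathbb{F}_q^*$, $\Delta_{f,a}(x)=f(x+a)-f(x)$, and the differential uniformity is $\delta_f=\max_{a\in\mathbb{F}_q^*,\,c\in\mathbb{F}_q}|\{x\in\mathbb{F}_q:\Delta_{f,a}(x)=c\}|$. *)

(* Defs.v *)
From mathcomp Require Import all_boot all_order all_algebra all_field.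
Set Implicit Arguments. Unset Strict Implicit. Unset Printing Implicit Defensive.
Import GRing.Theory.
Local Open Scope ring_scope.

Definition is_perm_poly (F : finFieldType) (f : {poly F}) : Prop :=
  bijective (fun c : F => f.[c]).

Definition Delta (F : finFieldType) (f : {poly F}) (a x : F) : F :=
  f.[x + a] - f.[x].

Definition diff_unif (F : finFieldType) (f : {poly F}) : nat :=
  \max_(a : F | a != 0) \max_(c : F) #|[set x : F | Delta f a x == c]|.

(* Main.v *)
Require Import Defs.
From mathcomp Require Import all_boot all_order all_algebra all_field.
Import GRing.Theory.
Local Open Scope ring_scope.
From mathcomp Require Import ring zify.
From Stdlib Require Import Lia.
Set Implicit Arguments. Unset Strict Implicit.

Lemma cardU_le (T : finType) (A B : {set T}) : (#|A :|: B| <= #|A| + #|B|)%N.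
Proof. by rewrite cardsU leq_subr. Qed.

Lemma card_le1 (T : finType) (A : {set T}) :
  (forall x y, x \in A -> y \in A -> x = y) -> (#|A| <= 1)%N.
Proof. by move=> H; apply/card_le1_eqP => x y Hx Hy; apply: H. Qed.

Lemma card_le2 (T : finType) (A : {set T}) :
  (forall x y z, x \in A -> y \in A -> z \in A -> [\/ x = y, x = z | y = z]) -> (#|A| <= 2)%N.
Proof.
move=> H; have [/eqP ->|/set0Pn [x Hx]] := boolP (A == set0); first by rewrite cards0.
rewrite (cardsD1 x) Hx add1n ltnS; apply: card_le1 => y z.
rewrite !inE => /andP [Hyx Hy] /andP [Hzx Hz].
case: (H x y z Hx Hy Hz) => E.
- by rewrite E eqxx in Hyx.
- by rewrite E eqxx in Hzx.
- exact: E.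
Qed.

Lemma card_inj_le (T : finType) (P : pred T) (B : {set T}) (phi : T -> T) :
  injective phi -> (forall x, P x -> phi x \in B) -> (#|[set x | P x]| <= #|B|)%N.
Proof.
move=> inj H; rewrite -(card_imset _ inj); apply: subset_leq_card.
by apply/subsetP => y /imsetP [x]; rewrite inE => Px ->; apply: H.
Qed.

Lemma card_gt0_ex (T : finType) (A : {set T}) : (0 < #|A|)%N -> exists x, x \in A.
Proof. by rewrite card_gt0 => /set0Pn. Qed.


Lemma cardp (F : finFieldType) : exists p n, [/\ prime p, p \in [pchar F] & #|F| = (p ^ n)%N].
Proof.
have [p pr pc] := finPcharP F.
exists p, (logn p #|pPrimeCharType pc|); split => //.
exact: (card_pprimeChar pc).
Qed.

Lemma cong_pow (R : idomainType) (m a b : {poly R}) n :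
  m %| a - b -> m %| a ^+ n - b ^+ n.
Proof.
move=> H; elim: n => [|n IH]; first by rewrite !expr0 subrr dvdp0.
have -> : a ^+ n.+1 - b ^+ n.+1 = a * (a ^+ n - b ^+ n) + b ^+ n * (a - b).
  by rewrite !exprS; ring.
by rewrite dvdp_add // dvdp_mull.
Qed.

Lemma eta2 (F : finFieldType) k : #|F| = (8 * k + 3)%N -> (2:F) ^+ (4 * k + 1) = -1.
Proof.
move=> hF.
have [p [n [pr pc hpn]]] := cardp F.
set h := (4 * k + 1)%N.
set m : {poly F} := 'X^2 + 1.
set X : {poly F} := 'X.
have hX2 : m %| X ^+ 2 - (-1) by rewrite opprK dvdpp.
have hXe : forall j, m %| (X ^+ 2) ^+ j - (-1) ^+ j by move=> j; exact: cong_pow.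
have pn : [pchar {poly F}].-nat #|F|.
  rewrite (eq_pnat _ (pchar_poly F)) (eq_pnat _ (pcharf_eq pc)) hpn pnatX.
  by rewrite pnat_id.
have A1 : m %| (1 + X) ^+ #|F| - (1 - X).
  rewrite exprDn_pchar // expr1n.
  have -> : X ^+ #|F| = X * (X ^+ 2) ^+ h.
    by rewrite -exprM -exprS hF /h; congr (_ ^+ _); lia.
  have -> : 1 + X * (X ^+ 2) ^+ h - (1 - X) = X * ((X ^+ 2) ^+ h - (-1) ^+ h).
    rewrite (_ : (-1) ^+ h = -1 :> {poly F}); first by ring.
    by rewrite -signr_odd /h oddD oddM /= expr1.
  exact: dvdp_mull.
have A2 : m %| ((1 + X) ^+ 2) ^+ h - (2 * X) ^+ h.
  apply: cong_pow.
  have -> : (1 + X) ^+ 2 - 2 * X = m by rewrite /m /X; ring.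
  exact: dvdpp.
have A3 : m %| (2 * X) ^+ h - 2 ^+ h * X.
  have -> : (2 * X) ^+ h - 2 ^+ h * X = 2 ^+ h * X * ((X ^+ 2) ^+ (2 * k) - (-1) ^+ (2 * k)).
    rewrite exprMn (_ : (-1) ^+ (2 * k) = 1 :> {poly F}); last by rewrite -signr_odd oddM.
    rewrite -exprM mulrBr mulr1 -mulrA -exprS /h; congr (_ - _).
    by rewrite addn1 mulnA.
  exact: dvdp_mull.
set c : {poly F} := 2 ^+ h.
set P := ((1 + X) ^+ 2) ^+ h.
have Eq : (1 + X) ^+ #|F| = (1 + X) * P by rewrite /P -exprM -exprS hF /h; congr (_ ^+ _); lia.
have D : m %| (1 + c) * (X - 1).
  have -> : (1 + c) * (X - 1) = ((1 + X) ^+ #|F| - (1 - X)) - (1 + X) * ((P - (2 * X) ^+ h) + ((2 * X) ^+ h - c * X)) - c * m.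
    rewrite Eq /m /X; ring.
  by rewrite dvdp_sub ?dvdp_mull // dvdp_sub // dvdp_mull // dvdp_add.
have cE : 1 + c = (1 + 2 ^+ h : F)%:P by rewrite rmorphD rmorph1 rmorphXn /c rmorph_nat.
rewrite cE in D.
apply/eqP; rewrite -subr_eq0 opprK addrC; apply/eqP.
apply/eqP/negPn/negP => Hne.
have nz : (1 + 2 ^+ h : F)%:P * (X - 1) != 0.
  by rewrite mulf_neq0 ?polyC_eq0 // /X -polyC1 polyXsubC_eq0.
have := dvdp_leq nz D.
rewrite /m -polyC1 size_XnaddC //.
apply/negP; rewrite -ltnNge.
apply: (leq_ltn_trans (size_polyMleq _ _)).
by rewrite size_polyC Hne /X size_XsubC.
Qed.


Definition good (F : fieldType) (h : nat) :=
  [/\ (0 < h)%N, (2:F) != 0, (forall x : F, x != 0 -> x ^+ h = 1 \/ x ^+ h = -1),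
      (-1:F) ^+ h = -1 & (2:F) ^+ h = -1].


Lemma g_0 (F : fieldType) h : good F h -> (0:F) ^+ h = 0.
Proof. by case=> h0 *; rewrite expr0n eqn0Ngt h0. Qed.

Lemma g_N (F : fieldType) h (x : F) : good F h -> (- x) ^+ h = - x ^+ h.
Proof. by case=> _ _ _ em1 _; rewrite -mulN1r exprMn em1 mulN1r. Qed.

Lemma g_2 (F : fieldType) h (x : F) : good F h -> (2 * x) ^+ h = - x ^+ h.
Proof. by case=> _ _ _ _ e2; rewrite exprMn e2 mulN1r. Qed.

Lemma g_1m1 (F : fieldType) h : good F h -> (1:F) != -1.
Proof.
case=> _ two _ _ _; apply/negP => /eqP E.
have E2 : (2:F) = 1 - (-1) by ring.
by move: two; rewrite E2 -E subrr eqxx.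
Qed.

Lemma g_eta (F : fieldType) h (x : F) : good F h -> [\/ x ^+ h = 0, x ^+ h = 1 | x ^+ h = -1].
Proof.
move=> G; have [->|nz] := eqVneq x 0; first by apply: Or31; exact: g_0 G.
by case: G => _ _ H _ _; case: (H x nz) => E; [apply: Or32 | apply: Or33].
Qed.

Lemma g_sq (F : fieldType) h (x : F) : good F h -> (x ^+ 2) ^+ h != -1.
Proof.
move=> G; rewrite -exprM mulnC exprM.
case: (@g_eta _ _ x G) => ->.
- by rewrite expr0n /= eq_sym oppr_eq0 oner_neq0.
- by rewrite expr1n (g_1m1 G).
- by rewrite sqrrN expr1n (g_1m1 G).
Qed.

Lemma g_nz (F : fieldType) h (x : F) : good F h -> x ^+ h != 0 -> x != 0.
Proof. by move=> G; apply: contra => /eqP ->; rewrite (g_0 G). Qed.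

Lemma g_2n (F : fieldType) h k : good F h -> (2:F) ^+ k != 0.
Proof. by case=> _ two _ _ _; rewrite expf_neq0. Qed.

Lemma cancel_l (F : fieldType) (k x : F) : k != 0 -> k * x = 0 -> x = 0.
Proof. by move=> nz /eqP; rewrite mulf_eq0 (negbTE nz) => /eqP. Qed.

Lemma quad_sum (F : fieldType) (a b c y1 y2 : F) :
  (y1 + 1) ^+ 2 * a - y1 ^+ 2 * b = c -> (y2 + 1) ^+ 2 * a - y2 ^+ 2 * b = c ->
  y1 != y2 -> (a - b) * (y1 + y2) + 2 * a = 0.
Proof.
move=> E1 E2 ne.
have H : (y1 - y2) * ((a - b) * (y1 + y2) + 2 * a) = 0.
  rewrite (_ : (y1 - y2) * _ = ((y1 + 1) ^+ 2 * a - y1 ^+ 2 * b) - ((y2 + 1) ^+ 2 * a - y2 ^+ 2 * b)); last by ring.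
  by rewrite E1 E2 subrr.
by apply: cancel_l H; rewrite subr_eq0.
Qed.


Definition Qe (F : fieldType) (a b c y : F) := (y + 1) ^+ 2 * a - y ^+ 2 * b = c.

Lemma uniq_lin (F : fieldType) (a c y1 y2 : F) : (2:F) != 0 -> a != 0 ->
  Qe a a c y1 -> Qe a a c y2 -> y1 = y2.
Proof.
move=> two na E1 E2; have [//|ne] := eqVneq y1 y2; exfalso.
have := quad_sum E1 E2 ne; rewrite subrr mul0r add0r => /eqP.
by rewrite mulf_eq0 (negbTE two) (negbTE na).
Qed.

Lemma quad3 (F : fieldType) (a b c x y z : F) : a - b != 0 ->
  Qe a b c x -> Qe a b c y -> Qe a b c z -> [\/ x = y, x = z | y = z].
Proof.
move=> nab Ex Ey Ez.
have [->|nxy] := eqVneq x y; first by apply: Or31.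
have [->|nxz] := eqVneq x z; first by apply: Or32.
apply: Or33.
have H1 := quad_sum Ex Ey nxy; have H2 := quad_sum Ex Ez nxz.
have : (a - b) * (y - z) = 0.
  rewrite (_ : (a - b) * (y - z) = ((a - b) * (x + y) + 2 * a) - ((a - b) * (x + z) + 2 * a)); last by ring.
  by rewrite H1 H2 subrr.
by move/(cancel_l nab)/eqP; rewrite subr_eq0 => /eqP.
Qed.

Lemma eta_one_m1 (F : fieldType) h : good F h -> (1:F) = -1 -> False.
Proof. by move=> G E; move: (g_1m1 G); rewrite {1}E eqxx. Qed.

Lemma L_SS_SN (F : fieldType) h (x0 y c : F) : good F h ->
  x0 ^+ h = 1 -> Qe (1+3) (1+3) c x0 -> Qe (-1+3) (1+3) c y -> False.
Proof.
move=> G ex E0 E1.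
have two : (2:F) != 0 by case: G.
have H : (y - 1) ^+ 2 = - (2 * (2 * x0)).
  apply/eqP; rewrite -subr_eq0 opprK; apply/eqP; apply: (cancel_l two).
  rewrite (_ : 2 * _ = ((x0 + 1) ^+ 2 * (1+3) - x0 ^+ 2 * (1+3)) - ((y + 1) ^+ 2 * (-1+3) - y ^+ 2 * (1+3))); last by ring.
  by rewrite E0 E1 subrr.
have := g_sq (y - 1) G; rewrite H (g_N _ G) !(g_2 _ G) ex => /negP; apply; apply/eqP; ring.
Qed.

Lemma L_SS_NS (F : fieldType) h (x0 y1 y2 c : F) : good F h ->
  x0 ^+ h = 1 -> Qe (1+3) (1+3) c x0 -> y1 ^+ h = -1 -> y2 ^+ h = -1 ->
  Qe (1+3) (-1+3) c y1 -> Qe (1+3) (-1+3) c y2 -> y1 = y2.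
Proof.
move=> G ex E0 e1 e2 E1 E2.
have two : (2:F) != 0 by case: G.
have [//|ne] := eqVneq y1 y2; exfalso.
have S := quad_sum E1 E2 ne.
have H : y1 * y2 = - (2 * (2 * x0)).
  apply/eqP; rewrite -subr_eq0 opprK; apply/eqP; apply: (cancel_l two).
  rewrite (_ : 2 * _ = y1 * ((1 + 3 - (-1 + 3)) * (y1 + y2) + 2 * (1 + 3)) - (((y1 + 1) ^+ 2 * (1+3) - y1 ^+ 2 * (-1+3)) - ((x0 + 1) ^+ 2 * (1+3) - x0 ^+ 2 * (1+3)))); last by ring.
  by rewrite S E0 E1 subrr mulr0 subr0.
apply: (eta_one_m1 G).
have : (y1 * y2) ^+ h = 1 by rewrite exprMn e1 e2 mulrNN mulr1.
by rewrite H (g_N _ G) !(g_2 _ G) ex opprK.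
Qed.

Lemma L_SS_T0 (F : fieldType) h (x0 : F) : good F h ->
  x0 ^+ h = 1 -> Qe (1+3) (1+3) (1+3) x0 -> False.
Proof.
move=> G ex E0.
have two : (2:F) != 0 by case: G.
have : x0 = 0.
  apply: (cancel_l two); apply: (cancel_l two); apply: (cancel_l two).
  rewrite (_ : 2 * _ = (x0 + 1) ^+ 2 * (1+3) - x0 ^+ 2 * (1+3) - (1 + 3)); last by ring.
  by rewrite E0 subrr.
move=> z; move: ex; rewrite z (g_0 G) => E.
by apply: (eta_one_m1 G); rewrite -E oppr0.
Qed.

Lemma L_Tm_NN (F : fieldType) h (y : F) : good F h ->
  (y + 1) ^+ h = -1 -> Qe (-1+3) (-1+3) (- (-1+3)) y -> False.
Proof.
move=> G ex E0.
have two : (2:F) != 0 by case: G.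
have : y + 1 = 0.
  apply: (cancel_l two); apply: (cancel_l two).
  rewrite (_ : 2 * _ = (y + 1) ^+ 2 * (-1+3) - y ^+ 2 * (-1+3) - (- (-1 + 3))); last by ring.
  by rewrite E0 subrr.
move=> z; move: ex; rewrite z (g_0 G) => E.
by apply: (eta_one_m1 G); rewrite -[LHS]opprK -E oppr0.
Qed.

Lemma L_Tm_NS (F : fieldType) h (y : F) : good F h ->
  (y + 1) ^+ h = 1 -> Qe (1+3) (-1+3) (- (-1+3)) y -> y = -3.
Proof.
move=> G ex E0.
have two : (2:F) != 0 by case: G.
have : 2 * ((y + 1) * (y + 3)) = 0.
  rewrite (_ : 2 * _ = (y + 1) ^+ 2 * (1+3) - y ^+ 2 * (-1+3) - (- (-1 + 3))); last by ring.
  by rewrite E0 subrr.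
move/(cancel_l two)/eqP; rewrite mulf_eq0 => /orP [/eqP z|].
  by move: ex; rewrite z (g_0 G) => E; exfalso; apply: (eta_one_m1 G); rewrite -E oppr0.
by rewrite addr_eq0 => /eqP.
Qed.

Lemma L_NN_NS (F : fieldType) h (y0 y1 y2 c : F) : good F h ->
  (y0 + 1) ^+ h = -1 -> Qe (-1+3) (-1+3) c y0 -> (y1 + 1) ^+ h = 1 -> (y2 + 1) ^+ h = 1 ->
  Qe (1+3) (-1+3) c y1 -> Qe (1+3) (-1+3) c y2 -> y1 = y2.
Proof.
move=> G ex E0 e1 e2 E1 E2.
have two : (2:F) != 0 by case: G.
have [//|ne] := eqVneq y1 y2; exfalso.
have S := quad_sum E1 E2 ne.
have H : (y1 + 1) * (y2 + 1) = - (2 * (y0 + 1)).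
  apply/eqP; rewrite -subr_eq0 opprK; apply/eqP; apply: (cancel_l two).
  rewrite (_ : 2 * _ = (y1 + 1) * ((1 + 3 - (-1 + 3)) * (y1 + y2) + 2 * (1 + 3)) - (((y1 + 1) ^+ 2 * (1+3) - y1 ^+ 2 * (-1+3)) - ((y0 + 1) ^+ 2 * (-1+3) - y0 ^+ 2 * (-1+3)))); last by ring.
  by rewrite S E0 E1 subrr mulr0 subr0.
apply: (eta_one_m1 G).
have : ((y1 + 1) * (y2 + 1)) ^+ h = 1 by rewrite exprMn e1 e2 mulr1.
by rewrite H (g_N _ G) (g_2 _ G) ex => K; rewrite -{1}K; ring.
Qed.

Lemma L_T0_SN (F : fieldType) h (y : F) : good F h ->
  Qe (-1+3) (1+3) (1+3) y -> y = 1.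
Proof.
move=> G E0.
have two : (2:F) != 0 by case: G.
have : 2 * ((y - 1) * (y - 1)) = 0.
  rewrite (_ : 2 * _ = - ((y + 1) ^+ 2 * (-1+3) - y ^+ 2 * (1+3) - (1 + 3))); last by ring.
  by rewrite E0 subrr oppr0.
move/(cancel_l two)/eqP; rewrite mulf_eq0 orbb subr_eq0 => /eqP //.
Qed.

Lemma L_T0_NS (F : fieldType) h (y : F) : good F h ->
  y ^+ h = -1 -> Qe (1+3) (-1+3) (1+3) y -> y = -4.
Proof.
move=> G ex E0.
have two : (2:F) != 0 by case: G.
have : 2 * (y * (y + 4)) = 0.
  rewrite (_ : 2 * _ = (y + 1) ^+ 2 * (1+3) - y ^+ 2 * (-1+3) - (1 + 3)); last by ring.
  by rewrite E0 subrr.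
move/(cancel_l two)/eqP; rewrite mulf_eq0 => /orP [/eqP z|].
  by move: ex; rewrite z (g_0 G) => E; exfalso; apply: (eta_one_m1 G); rewrite -[LHS]opprK -E oppr0.
by rewrite addr_eq0 => /eqP.
Qed.


Definition fe (F : fieldType) (h : nat) (e x : F) := x ^+ 2 * (x ^+ h + e).

Lemma key (F : finFieldType) h (c : F) : good F h ->
  leq #|[set y : F | fe h 3 (y + 1) - fe h 3 y == c]| 4.
Proof.
move=> G.
have two : (2:F) != 0 by case: G.
have n4 : (1 + 3 : F) != 0 by rewrite (_ : (1 + 3 : F) = 2 * 2) ?mulf_neq0 //; ring.
have n2 : (-1 + 3 : F) != 0 by rewrite (_ : (-1 + 3 : F) = 2) //; ring.
have d1 : (-1 + 3) - (1 + 3) != 0 :> F by rewrite (_ : (-1 + 3) - (1 + 3) = - 2 :> F) ?oppr_eq0 //; ring.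
have d2 : (1 + 3) - (-1 + 3) != 0 :> F by rewrite (_ : (1 + 3) - (-1 + 3) = 2 :> F) //; ring.
pose C (i j : F) := [set y : F | (y ^+ h == i) && ((y + 1) ^+ h == j) && (fe h 3 (y + 1) - fe h 3 y == c)].
pose T0 := [set y : F | (y == 0) && (fe h 3 (y + 1) - fe h 3 y == c)].
pose Tm := [set y : F | (y == -1) && (fe h 3 (y + 1) - fe h 3 y == c)].
have memC : forall i j y, y \in C i j -> [/\ y ^+ h = i, (y + 1) ^+ h = j & Qe (j + 3) (i + 3) c y].
  move=> i j y; rewrite inE => /andP [/andP [/eqP a /eqP b] /eqP E]; split => //.
  by rewrite /Qe -E /fe a b.
have memT0 : forall y, y \in T0 -> y = 0 /\ c = 1 + 3.
  move=> y; rewrite inE => /andP [/eqP -> /eqP <-]; split => //.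
  by rewrite /fe add0r !expr1n (g_0 G); ring.
have memTm : forall y, y \in Tm -> y = -1 /\ c = - (-1 + 3).
  move=> y; rewrite inE => /andP [/eqP -> /eqP <-]; split => //.
  by rewrite /fe addNr (g_0 G) (g_N _ G) !expr1n; ring.
have sub : [set y : F | fe h 3 (y + 1) - fe h 3 y == c] \subset
   C 1 1 :|: C 1 (-1) :|: C (-1) 1 :|: C (-1) (-1) :|: T0 :|: Tm.
  apply/subsetP => y; rewrite inE => Ey; rewrite !inE Ey !andbT.
  have [->|y0] := eqVneq y 0; first by rewrite /= !orbT.
  have [->|y1] := eqVneq y (-1); first by rewrite ?eqxx !orbT.
  have y1' : y + 1 != 0 by apply: contraNneq y1 => E; rewrite -[y](addrK 1) E sub0r.
  case: G => _ _ H _ _.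
  by case: (H _ y0) => ->; case: (H _ y1') => ->; rewrite !eqxx ?orbT.
have le := subset_leq_card sub.
have le2 : leq #|C 1 1 :|: C 1 (-1) :|: C (-1) 1 :|: C (-1) (-1) :|: T0 :|: Tm|
   (#|C 1%R 1%R| + #|C 1%R (-1)%R| + #|C (-1)%R 1%R| + #|C (-1)%R (-1)%R| + #|T0| + #|Tm|)%N.
  have := cardU_le (C 1 1) (C 1 (-1)).
  have := cardU_le (C 1 1 :|: C 1 (-1)) (C (-1) 1).
  have := cardU_le (C 1 1 :|: C 1 (-1) :|: C (-1) 1) (C (-1) (-1)).
  have := cardU_le (C 1 1 :|: C 1 (-1) :|: C (-1) 1 :|: C (-1) (-1)) T0.
  have := cardU_le (C 1 1 :|: C 1 (-1) :|: C (-1) 1 :|: C (-1) (-1) :|: T0) Tm.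
  lia.
have le3 := leq_trans le le2; clear le le2 sub.
set s := #|C 1 1| in le3 *; set sn := #|C 1 (-1)| in le3 *; set ns := #|C (-1) 1| in le3 *.
set n := #|C (-1) (-1)| in le3 *; set z := #|T0| in le3 *; set m := #|Tm| in le3 *.
have Hs : (s <= 1)%N.
  apply: card_le1 => x y /memC [_ _ Ex] /memC [_ _ Ey]; exact: uniq_lin two n4 Ex Ey.
have Hn : (n <= 1)%N.
  apply: card_le1 => x y /memC [_ _ Ex] /memC [_ _ Ey]; exact: uniq_lin two n2 Ex Ey.
have Hsn : (sn <= 2)%N.
  apply: card_le2 => x y w /memC [_ _ Ex] /memC [_ _ Ey] /memC [_ _ Ew]; exact: quad3 d1 Ex Ey Ew.
have Hns : (ns <= 2)%N.
  apply: card_le2 => x y w /memC [_ _ Ex] /memC [_ _ Ey] /memC [_ _ Ew]; exact: quad3 d2 Ex Ey Ew.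
have Hz : (z <= 1)%N.
  by apply: card_le1 => x y /memT0 [-> _] /memT0 [-> _].
have Hm : (m <= 1)%N.
  by apply: card_le1 => x y /memTm [-> _] /memTm [-> _].
have empty : forall (A : {set F}), (forall y, y \in A -> False) -> #|A| = 0%N.
  by move=> A HA; apply/eqP; rewrite cards_eq0; apply/eqP/setP => y; rewrite inE; apply/negP => /HA.
have G1 : (0 < s)%N -> sn = 0%N.
  move/card_gt0_ex => [x0 /memC [ex _ E0]]; apply: empty => y /memC [_ _ Ey].
  exact: L_SS_SN G ex E0 Ey.
have G2 : (0 < s)%N -> (ns <= 1)%N.
  move/card_gt0_ex => [x0 /memC [ex _ E0]]; apply: card_le1 => y1 y2 /memC [e1 _ E1] /memC [e2 _ E2].
  exact: L_SS_NS G ex E0 e1 e2 E1 E2.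
have G3 : (0 < s)%N -> z = 0%N.
  move/card_gt0_ex => [x0 /memC [ex _ E0]]; apply: empty => y /memT0 [_ ec].
  by rewrite ec in E0; exact: L_SS_T0 G ex E0.
have G4 : (0 < m)%N -> n = 0%N.
  move/card_gt0_ex => [x0 /memTm [_ ec]]; apply: empty => y /memC [_ ey Ey].
  by rewrite ec in Ey; exact: L_Tm_NN G ey Ey.
have G5 : (0 < m)%N -> (ns <= 1)%N.
  move/card_gt0_ex => [x0 /memTm [_ ec]]; apply: card_le1 => y1 y2 /memC [_ e1 E1] /memC [_ e2 E2].
  rewrite ec in E1 E2; by rewrite (L_Tm_NS G e1 E1) (L_Tm_NS G e2 E2).
have G6 : (0 < n)%N -> (ns <= 1)%N.
  move/card_gt0_ex => [y0 /memC [_ ey0 E0]]; apply: card_le1 => y1 y2 /memC [_ e1 E1] /memC [_ e2 E2].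
  exact: L_NN_NS G ey0 E0 e1 e2 E1 E2.
have G7 : (0 < z)%N -> (sn <= 1)%N /\ (ns <= 1)%N.
  move/card_gt0_ex => [x0 /memT0 [_ ec]]; split.
    apply: card_le1 => y1 y2 /memC [_ _ E1] /memC [_ _ E2].
    by rewrite ec in E1 E2; rewrite (L_T0_SN G E1) (L_T0_SN G E2).
  apply: card_le1 => y1 y2 /memC [e1 _ E1] /memC [e2 _ E2].
  by rewrite ec in E1 E2; rewrite (L_T0_NS G e1 E1) (L_T0_NS G e2 E2).
move: le3 Hs Hn Hsn Hns Hz Hm G1 G2 G3 G4 G5 G6 G7.
clearbody s sn ns n z m.
lia.
Qed.


Lemma fe_hom (F : fieldType) h (b z : F) : b ^+ h = 1 -> fe h 3 (b * z) = b ^+ 2 * fe h 3 z.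
Proof. by move=> eb; rewrite /fe !exprMn eb mul1r; ring. Qed.

Lemma red_p (F : finFieldType) h (b c : F) : good F h -> b ^+ h = 1 -> b != 0 ->
  leq #|[set x : F | fe h 3 (x + b) - fe h 3 x == c]| 4.
Proof.
move=> G eb b0.
apply: leq_trans (key (c / b ^+ 2) G).
apply: (card_inj_le (phi := fun x => x / b)).
  exact: can_inj (divfK b0).
move=> x /eqP E; rewrite inE; apply/eqP.
have b2 : b ^+ 2 != 0 by rewrite expf_neq0.
rewrite -E; have -> : fe h 3 (x + b) - fe h 3 x = b ^+ 2 * (fe h 3 (x / b + 1) - fe h 3 (x / b)).
  rewrite mulrBr -!(fe_hom _ eb) mulrDr mulr1 mulrC divfK //.
by rewrite mulrAC mulfV // mul1r.
Qed.

Lemma red_m (F : finFieldType) h (b c : F) : good F h -> b ^+ h = 1 -> b != 0 ->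
  leq #|[set x : F | fe h 3 (x - b) - fe h 3 x == c]| 4.
Proof.
move=> G eb b0.
apply: leq_trans (key (- c / b ^+ 2) G).
apply: (card_inj_le (phi := fun x => x / b - 1)).
  apply: (can_inj (g := fun y => (y + 1) * b)) => x /=; rewrite subrK divfK //.
move=> x /eqP E; rewrite inE; apply/eqP.
have b2 : b ^+ 2 != 0 by rewrite expf_neq0.
rewrite -E; have -> : fe h 3 (x - b) - fe h 3 x = - (b ^+ 2 * (fe h 3 (x / b - 1 + 1) - fe h 3 (x / b - 1))).
  rewrite subrK mulrBr -!(fe_hom _ eb) mulrBr mulr1 mulrC divfK //; ring.
by rewrite opprK mulrAC mulfV // mul1r.
Qed.

Lemma red3 (F : finFieldType) h (a c : F) : good F h -> a != 0 ->
  leq #|[set x : F | fe h 3 (x + a) - fe h 3 x == c]| 4.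
Proof.
move=> G a0.
case: (G) => _ _ H _ _.
case: (H a a0) => ea; first exact: red_p.
have := red_m c G (b := - a); rewrite opprK; apply; last by rewrite oppr_eq0.
by rewrite (g_N _ G) ea opprK.
Qed.

Lemma fe_m3 (F : fieldType) h (x : F) : good F h -> fe h (-3) x = - fe h 3 (- x).
Proof. by move=> G; rewrite /fe (g_N _ G) sqrrN; ring. Qed.

Lemma red_all (F : finFieldType) h (eps a c : F) : good F h -> a != 0 -> (eps = 3 \/ eps = -3) ->
  leq #|[set x : F | fe h eps (x + a) - fe h eps x == c]| 4.
Proof.
move=> G a0 [->|->]; first exact: red3.
apply: leq_trans (red3 c G a0).
apply: (card_inj_le (phi := fun x => - x - a)).
  by apply: (can_inj (g := fun y => - y - a)) => x /=; ring.
move=> x /eqP E; rewrite inE; apply/eqP.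
rewrite -E !(fe_m3 _ G) subrK opprD; ring.
Qed.


Lemma g_zero (F : fieldType) h (x : F) : good F h -> x ^+ h = 0 -> x = 0.
Proof.
move=> G E; have [//|nz] := eqVneq x 0; exfalso; case: G => _ _ H _ _.
by case: (H x nz) => E'; move: E; rewrite E' => /eqP; rewrite ?oner_eq0 ?oppr_eq0 ?oner_eq0.
Qed.

Lemma fe3_inj (F : fieldType) h : good F h -> injective (fe h 3 : F -> F).
Proof.
move=> G x y; rewrite /fe.
have two : (2:F) != 0 by case: G.
have n4 : (1 + 3 : F) != 0 by rewrite (_ : (1 + 3 : F) = 2 * 2) ?mulf_neq0 //; ring.
have n2 : (-1 + 3 : F) != 0 by rewrite (_ : (-1 + 3 : F) = 2) //; ring.
have sq1 : forall z : F, z ^+ h = 1 \/ z ^+ h = -1 -> (z ^+ 2) ^+ h = 1.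
  by move=> z [] E; rewrite -exprM mulnC exprM E ?sqrrN expr1n.
have m1 := g_1m1 G.
case: (g_eta x G) => ex; case: (g_eta y G) => ey; rewrite ex ey.
- by rewrite (g_zero G ex) (g_zero G ey).
- rewrite (g_zero G ex) expr0n mul0r => /esym /eqP; rewrite mulf_eq0 (negbTE n4) orbF.
  by rewrite expf_eq0 /= => /eqP.
- rewrite (g_zero G ex) expr0n mul0r => /esym /eqP; rewrite mulf_eq0 (negbTE n2) orbF.
  by rewrite expf_eq0 /= => /eqP.
- rewrite (g_zero G ey) expr0n mul0r => /eqP; rewrite mulf_eq0 (negbTE n4) orbF.
  by rewrite expf_eq0 /= => /eqP.
- move/(mulIf n4)/eqP; rewrite eqf_sqr => /orP [/eqP //|/eqP E].
  by move: ex; rewrite E (g_N _ G) ey => /eqP; rewrite eq_sym (negbTE m1).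
- move=> E; exfalso; move: (congr1 (fun t => t ^+ h) E).
  rewrite (_ : x ^+ 2 * (1 + 3) = 2 * (2 * x ^+ 2)); last by ring.
  rewrite (_ : y ^+ 2 * (-1 + 3) = 2 * y ^+ 2); last by ring.
  rewrite !(g_2 _ G) opprK !sq1; [|by right|by left].
  by move/eqP; rewrite (negbTE m1).
- rewrite (g_zero G ey) expr0n mul0r => /eqP; rewrite mulf_eq0 (negbTE n2) orbF.
  by rewrite expf_eq0 /= => /eqP.
- move=> E; exfalso; move: (congr1 (fun t => t ^+ h) E).
  rewrite (_ : y ^+ 2 * (1 + 3) = 2 * (2 * y ^+ 2)); last by ring.
  rewrite (_ : x ^+ 2 * (-1 + 3) = 2 * x ^+ 2); last by ring.
  rewrite !(g_2 _ G) opprK !sq1; [|by left|by right].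
  by move/eqP; rewrite eq_sym (negbTE m1).
- move/(mulIf n2)/eqP; rewrite eqf_sqr => /orP [/eqP //|/eqP E].
  by move: ex; rewrite E (g_N _ G) ey opprK => /eqP; rewrite (negbTE m1).
Qed.

Lemma good_q (F : finFieldType) q : #|F| = q -> (q %% 8 = 3)%N -> good F ((q - 1) %/ 2).
Proof.
move=> hq h8.
set k := (q %/ 8)%N.
have qk : q = (8 * k + 3)%N by rewrite /k {1}(divn_eq q 8) h8 mulnC.
have hk : ((q - 1) %/ 2 = 4 * k + 1)%N.
  by rewrite qk (_ : (8 * k + 3 - 1 = (4 * k + 1) * 2)%N) ?mulnK //; lia.
rewrite hk.
have e2 : (2:F) ^+ (4 * k + 1) = -1 by apply: eta2; rewrite hq qk.
have em1 : (-1:F) ^+ (4 * k + 1) = -1 by rewrite -signr_odd oddD oddM /= expr1.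
have two : (2:F) != 0.
  apply/negP => /eqP z; move: e2; rewrite z expr0n addn1 /= => /esym /eqP.
  by rewrite oppr_eq0 oner_eq0.
split => //; first by rewrite addn1.
move=> x nx.
have xq : x ^+ (8 * k + 2) = 1.
  apply: (mulIf nx); rewrite mul1r -exprSr.
  have -> : (8 * k + 2).+1 = #|F| by rewrite hq qk; lia.
  exact: expf_card.
have : (x ^+ (4 * k + 1)) ^+ 2 == 1 by rewrite -exprM (_ : ((4 * k + 1) * 2 = 8 * k + 2)%N) ?xq //; lia.
by rewrite sqrf_eq1 => /orP [/eqP ->|/eqP ->]; [left|right].
Qed.


Unset Implicit Arguments.

Theorem corollary1p3 (F : finFieldType) (q : nat) (eps : F)
    (hq : #|F| = q) (hq8 : (q %% 8 = 3)%N) (heps : eps = 3 \/ eps = -3) :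
  let f : {poly F} := 'X^2 * ('X^((q - 1) %/ 2) + eps%:P) in
  is_perm_poly f /\ (diff_unif f <= 4)%N.
Proof.
move=> f.
have G := good_q hq hq8.
have hE : forall x, f.[x] = fe ((q - 1) %/ 2) eps x.
  by move=> x; rewrite /f /fe !hornerE.
split.
  rewrite /is_perm_poly; apply: injF_bij => x y; rewrite !hE.
  case: heps => ->; first exact: fe3_inj.
  rewrite !(fe_m3 _ G) => /oppr_inj /(fe3_inj G); exact: oppr_inj.
rewrite /diff_unif; apply/bigmax_leqP => a a0; apply/bigmax_leqP => c _.
have -> : [set x | Delta f a x == c] = [set x | fe ((q - 1) %/ 2) eps (x + a) - fe ((q - 1) %/ 2) eps x == c].
  by apply/setP => x; rewrite !inE /Delta !hE.
exact: red_all.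
Qed.
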